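(* Let $L=\sum_{k=1}^m P_{n_k}$ be a linear forest and $n$ a positive integer. Then $L\in\operatorname{obs}(P_n)$ if and only if one of the following holds: (1) $\mu(L)=n+1$ and $n_k=2$ for all $k\in\{1,\dots,m\}$; (2) $\mu(L)=n+1$, $n_k\in\{1,2,4,6\}$ for all $k$, and $m_1=1$; (3) $\mu(L)=n+2$, $n_k\in\{1,2,4\}$ for all $k$, and $m_1=1$.
   Context: All graphs are finite, simple and loopless. $P_n$ denotes the path on $n$ vertices ($P_1=K_1$, $P_2=K_2$). A linear forest is a disjoint union of paths; $\sum_{k=1}^m P_{n_k}$ denotes the linear forest whose $k$-th component is the path on $n_k$ vertices, and $m_i$ denotes the number of indices $k$ with $n_k=i$. A full-homomorphism $\varphi\colon G\to H$ is a map $V(G)\to V(H)$ such that for all $x,y\in V(G)$, $xy\in E(G)$ if and only if $\varphi(x)\varphi(y)\in E(H)$. A full $H$-colouring of $G$ is a full-homomorphism $G\to H$. A minimal $H$-obstruction is a graph $G$ that admits no full $H$-colouring while every proper induced subgraph of $G$ admits one; $\operatorname{obs}(H)$ denotes the set of minimal $H$-obstructions (up to isomorphism). For a linear forest $L$, $\mu(L)$ is the minimum integer $n$ such that there is an injective full-homomorphism from $L$ to $P_n$. *)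

(* Defs.v *)
From mathcomp Require Import all_boot.
Local Open Scope nat_scope.
Set Implicit Arguments. Unset Strict Implicit. Unset Printing Implicit Defensive.

(* A (simple, loopless) graph is given by a finite vertex type T and a
   symmetric irreflexive adjacency relation e : rel T. *)

Definition path_rel (n : nat) : rel 'I_n :=
  fun i j => ((i : nat).+1 == j) || ((j : nat).+1 == i).

Definition full_hom (T U : finType) (e : rel T) (f : rel U) (phi : T -> U) : Prop :=
  forall x y, e x y = f (phi x) (phi y).

Definition full_colourable (T U : finType) (e : rel T) (f : rel U) : Prop :=
  exists phi : T -> U, full_hom e f phi.

Definition sub_vert (T : finType) (S : {set T}) : finType :=
  {x : T | x \in S}.

Definition induced (T : finType) (e : rel T) (S : {set T}) : rel (sub_vert S) :=
  fun x y => e (val x) (val y).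

Definition min_obstruction (T U : finType) (e : rel T) (f : rel U) : Prop :=
  ~ full_colourable e f /\
  forall S : {set T}, S \proper [set: T] -> full_colourable (@induced T e S) f.

(* The linear forest sum_{k} P_{n_k}, where ns = [:: n_1; ...; n_m]:
   vertices are pairs (k, i) with k < m and i < n_k. *)
Definition LF_vert (ns : seq nat) : finType :=
  {k : 'I_(size ns) & 'I_(nth 0 ns k)}.

Definition LF_rel (ns : seq nat) : rel (LF_vert ns) :=
  fun x y => (tag x == tag y) &&
    (((tagged x : nat).+1 == tagged y) || ((tagged y : nat).+1 == tagged x)).

Definition inj_full_to_path (ns : seq nat) (k : nat) : Prop :=
  exists phi : LF_vert ns -> 'I_k, injective phi /\ full_hom (@LF_rel ns) (@path_rel k) phi.

Definition mu_eq (ns : seq nat) (k : nat) : Prop :=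
  inj_full_to_path ns k /\ forall j, inj_full_to_path ns j -> k <= j.

(* Main.v *)
Require Import Defs.
From mathcomp Require Import all_boot.
From Stdlib Require Import Classical_Prop.
From mathcomp Require Import zify.
From mathcomp Require Import all_boot.
Set Implicit Arguments. Unset Strict Implicit. Unset Printing Implicit Defensive.

Definition adjn (a b : nat) : bool := (a.+1 == b) || (b.+1 == a).
Definition lfr (k i k' i' : nat) : bool := (k == k') && adjn i i'.
Definition valid (ns : seq nat) (k i : nat) : bool := (k < size ns) && (i < nth 0 ns k).
Definition PT : nat -> nat -> bool := fun _ _ => true.
Definition relab (ns : seq nat) (P : nat -> nat -> bool) (ns' : seq nat) (K I : nat -> nat -> nat) : Prop :=
 (forall k i, valid ns k i -> P k i -> valid ns' (K k i) (I k i)) /\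
 (forall k i k' i', valid ns k i -> P k i -> valid ns k' i' -> P k' i' ->
     lfr (K k i) (I k i) (K k' i') (I k' i') = lfr k i k' i').
Definition fullP (ns : seq nat) (P : nat -> nat -> bool) (n : nat) (g : nat -> nat -> nat) : Prop :=
 (forall k i, valid ns k i -> P k i -> g k i < n) /\
 (forall k i k' i', valid ns k i -> P k i -> valid ns k' i' -> P k' i' ->
     adjn (g k i) (g k' i') = lfr k i k' i').
Definition injn (ns : seq nat) (g : nat -> nat -> nat) : Prop :=
  forall k i k' i', valid ns k i -> valid ns k' i' -> g k i = g k' i' -> k = k' /\ i = i'.

Definition mkv (ns : seq nat) (k i : nat) (hk : k < size ns) (hi : i < nth 0 ns k) : LF_vert ns :=
  existT (fun k0 : 'I_(size ns) => 'I_(nth 0 ns k0)) (Ordinal hk) (Ordinal hi).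

Definition natmap (ns : seq nat) (f : LF_vert ns -> nat) (k i : nat) : nat :=
  match ltnP k (size ns) with
  | LtnNotGeq hk =>
    match ltnP i (nth 0 ns k) with
    | LtnNotGeq hi => f (mkv hk hi)
    | _ => 0 end
  | _ => 0 end.

Lemma natmap_mkv ns f k i (hk : k < size ns) (hi : i < nth 0 ns k) :
  natmap f k i = f (mkv hk hi).
Proof.
rewrite /natmap; case: ltnP => hk'; last by exfalso; lia.
case: ltnP => hi'; last by exfalso; lia.
by rewrite (bool_irrelevance hk' hk) (bool_irrelevance hi' hi).
Qed.

Lemma vP ns k i : valid ns k i -> (k < size ns) /\ (i < nth 0 ns k).
Proof. by move/andP. Qed.

Lemma valid_tag ns (x : LF_vert ns) : valid ns (tag x) (tagged x).
Proof. by case: x => [[k hk] [i hi]]; rewrite /valid /= hk hi. Qed.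

Lemma mkv_tag ns (x : LF_vert ns) :
  exists hk hi, x = @mkv ns (tag x) (tagged x) hk hi.
Proof. case: x => [[k hk] [i hi]] /=; by exists hk, hi. Qed.

Lemma LF_rel_mkv ns k i k' i' hk hi hk' hi' :
  LF_rel (@mkv ns k i hk hi) (@mkv ns k' i' hk' hi') = lfr k i k' i'.
Proof. by []. Qed.

Lemma LF_rel_tag ns (x y : LF_vert ns) : LF_rel x y = lfr (tag x) (tagged x) (tag y) (tagged y).
Proof. by []. Qed.

Lemma LF_eq ns (x y : LF_vert ns) : (tag x : nat) = tag y -> (tagged x : nat) = tagged y -> x = y.
Proof.
case: x => [k i]; case: y => [k' i'] /= e1.
have ek : k = k' by apply: val_inj.
subst k' => e2. have -> : i = i' by apply: val_inj. by [].
Qed.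

Lemma path_relE n (a b : 'I_n) : path_rel a b = adjn a b.
Proof. by []. Qed.

Lemma C3 ns n : full_colourable (@LF_rel ns) (@path_rel n) -> exists g, fullP ns PT n g.
Proof.
case=> phi Hphi.
exists (natmap (fun x => val (phi x))); split.
- move=> k i /vP [hk hi] _; rewrite (natmap_mkv _ hk hi); exact: ltn_ord.
- move=> k i k' i' /vP [hk hi] _ /vP [hk' hi'] _.
  rewrite (natmap_mkv _ hk hi) (natmap_mkv _ hk' hi') -path_relE -Hphi.
  by rewrite LF_rel_mkv.
Qed.

Lemma C1 ns n : inj_full_to_path ns n -> exists g, fullP ns PT n g /\ injn ns g.
Proof.
case=> phi [Hinj Hphi].
exists (natmap (fun x => val (phi x))); split; first split.
- move=> k i /vP [hk hi] _; rewrite (natmap_mkv _ hk hi); exact: ltn_ord.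
- move=> k i k' i' /vP [hk hi] _ /vP [hk' hi'] _.
  rewrite (natmap_mkv _ hk hi) (natmap_mkv _ hk' hi') -path_relE -Hphi.
  by rewrite LF_rel_mkv.
- move=> k i k' i' /vP [hk hi] /vP [hk' hi'].
  rewrite (natmap_mkv _ hk hi) (natmap_mkv _ hk' hi') => /val_inj /Hinj e.
  split.
  + by have := congr1 (fun x : LF_vert ns => (tag x : nat)) e.
  + by have := congr1 (fun x : LF_vert ns => (tagged x : nat)) e.
Qed.

Lemma C4 ns n g : fullP ns PT n g -> full_colourable (@LF_rel ns) (@path_rel n).
Proof.
case=> Hb Ha.
exists (fun x => Ordinal (Hb _ _ (valid_tag x) erefl)) => x y.
by rewrite path_relE /= Ha ?valid_tag.
Qed.

Lemma C2 ns n g : fullP ns PT n g -> injn ns g -> inj_full_to_path ns n.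
Proof.
case=> Hb Ha Hi.
exists (fun x => Ordinal (Hb _ _ (valid_tag x) erefl)); split.
- move=> x y /(congr1 val) /= e.
  have [e1 e2] := Hi _ _ _ _ (valid_tag x) (valid_tag y) e.
  exact: LF_eq.
- move=> x y; by rewrite path_relE /= Ha ?valid_tag.
Qed.

Lemma C5 (ns ns' : seq nat) (n : nat) (P : nat -> nat -> bool) K I : relab ns' PT ns K I ->
  (forall k i, valid ns' k i -> P (K k i) (I k i)) ->
  full_colourable (@induced _ (@LF_rel ns) [set x : LF_vert ns | P (tag x) (tagged x)]) (@path_rel n) ->
  exists g, fullP ns' PT n g.
Proof.
case=> Hv Hl HP [psi Hpsi].
pose S := [set x : LF_vert ns | P (tag x) (tagged x)].
pose f := fun x : LF_vert ns => if (insub x : option (sub_vert S)) is Some y then val (psi y) else 0.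
have fE : forall k i (hk : k < size ns) (hi : i < nth 0 ns k) (hP : P k i),
   exists u : sub_vert S, val u = mkv hk hi /\ natmap f k i = val (psi u).
  move=> k i hk hi hP.
  have hin : mkv hk hi \in S by rewrite inE.
  exists (Sub (mkv hk hi) hin); split => //.
  by rewrite (natmap_mkv _ hk hi) /f insubT.
exists (fun k i => natmap f (K k i) (I k i)); split.
- move=> k i hv _. have /vP [hk hi] := Hv _ _ hv erefl.
  have [u [_ ->]] := fE _ _ hk hi (HP _ _ hv). exact: ltn_ord.
- move=> k i k' i' hv _ hv' _.
  have /vP [hk hi] := Hv _ _ hv erefl.
  have /vP [hk' hi'] := Hv _ _ hv' erefl.
  have [u [eu ->]] := fE _ _ hk hi (HP _ _ hv).
  have [u' [eu' ->]] := fE _ _ hk' hi' (HP _ _ hv').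
  rewrite -path_relE -Hpsi /induced eu eu' LF_rel_mkv.
  exact: Hl.
Qed.

Lemma C6 (ns : seq nat) (n : nat) (P : nat -> nat -> bool) h : fullP ns P n h ->
  full_colourable (@induced _ (@LF_rel ns) [set x : LF_vert ns | P (tag x) (tagged x)]) (@path_rel n).
Proof.
case=> Hb Ha.
pose S := [set x : LF_vert ns | P (tag x) (tagged x)].
have HPu : forall u : sub_vert S, P (tag (val u)) (tagged (val u)).
  by move=> u; have := valP u; rewrite inE.
exists (fun u => Ordinal (Hb _ _ (valid_tag (val u)) (HPu u))) => u v.
by rewrite path_relE /= /induced LF_rel_tag Ha ?valid_tag ?HPu.
Qed.

Lemma restrict_col (T U : finType) (e : rel T) (f : rel U) (S S' : {set T}) :
  S \subset S' -> full_colourable (@induced T e S') f -> full_colourable (@induced T e S) f.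
Proof.
move=> /subsetP sub [psi Hpsi].
exists (fun u : sub_vert S => psi (Sub (val u) (sub _ (valP u)))) => u v.
by rewrite -Hpsi /induced /=.
Qed.

Definition wt (x : nat) : nat := if x is 0 then 0 else x.+1.
Definition W (ns : seq nat) : nat := sumn (map wt ns).
Definition off (ns : seq nat) (k : nat) : nat := sumn (map wt (take k ns)).

Lemma off_S ns k : off ns k.+1 = off ns k + (if k < size ns then wt (nth 0 ns k) else 0).
Proof.
rewrite /off; case: ltnP => hk.
- by rewrite (take_nth 0 hk) map_rcons sumn_rcons.
- by rewrite !take_oversize ?addn0 //; lia.
Qed.

Lemma off_mono ns k k' : k <= k' -> off ns k <= off ns k'.
Proof.
move=> h; rewrite -(subnKC h); elim: (k' - k) => [|d IH]; first by rewrite addn0.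
rewrite addnS off_S; lia.
Qed.

Lemma off_size ns : off ns (size ns) = W ns.
Proof. by rewrite /off take_size. Qed.

Lemma off_bound ns k : k < size ns -> off ns k + wt (nth 0 ns k) <= W ns.
Proof.
move=> hk; rewrite -off_size.
have := off_mono ns hk; rewrite off_S hk; lia.
Qed.

Lemma off_gap ns k k' : k < k' -> k < size ns -> off ns k + wt (nth 0 ns k) <= off ns k'.
Proof.
move=> hkk hk; have := off_mono ns hkk; rewrite off_S hk; lia.
Qed.

Lemma wt_pos x : 0 < x -> wt x = x.+1.
Proof. by case: x. Qed.

Lemma L1 ns n : (W ns).-1 <= n -> exists g, fullP ns PT n g /\ injn ns g.
Proof.
move=> hW.
have key : forall k i k' i', valid ns k i -> valid ns k' i' -> k < k' ->
   off ns k + i + 2 <= off ns k' + i'.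
  move=> k i k' i' /vP [hk hi] /vP [hk' hi'] hkk.
  have := off_gap hkk hk; rewrite wt_pos; lia.
exists (fun k i => off ns k + i); split; first split.
- move=> k i /vP [hk hi] _.
  have := off_bound hk; rewrite wt_pos; lia.
- move=> k i k' i' hv _ hv' _; rewrite /lfr /adjn.
  case: (ltngtP k k') => hkk.
  + have := key _ _ _ _ hv hv' hkk; lia.
  + have := key _ _ _ _ hv' hv hkk; lia.
  + subst k'; lia.
- move=> k i k' i' hv hv'.
  case: (ltngtP k k') => hkk.
  + have := key _ _ _ _ hv hv' hkk; lia.
  + have := key _ _ _ _ hv' hv hkk; lia.
  + subst k'; lia.
Qed.

Lemma W_set ns k a : k < size ns -> W (set_nth 0 ns k a) + wt (nth 0 ns k) = W ns + wt a.
Proof.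
elim: ns k => [|x ns IH] [|k] //= hk.
- rewrite /W /=; lia.
- have := IH k hk; rewrite /W /=; lia.
Qed.

Lemma W_rcons ns b : W (rcons ns b) = W ns + wt b.
Proof. by rewrite /W map_rcons sumn_rcons. Qed.

Lemma W_zero ns : (forall k, k < size ns -> nth 0 ns k = 0) -> W ns = 0.
Proof.
elim: ns => [|x ns IH] //= h.
have hx := h 0 erefl; rewrite /= in hx; subst x.
rewrite /W /=; apply: IH => k hk; exact: (h k.+1).
Qed.

Lemma valid_set0 ns ks k i : ks < size ns ->
  valid (set_nth 0 ns ks 0) k i = valid ns k i && (k != ks).
Proof.
move=> hks; rewrite /valid size_set_nth nth_set_nth /=.
case: eqP => [->|hne]; lia.
Qed.

Lemma run_dir ns n g k : fullP ns PT n g -> injn ns g -> k < size ns ->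
  (forall i, i < nth 0 ns k -> g k i = g k 0 + i) \/
  (forall i, i < nth 0 ns k -> g k i + i = g k 0).
Proof.
move=> [Hb Ha] Hi hk.
set v := nth 0 ns k.
have vk : forall i, i < v -> valid ns k i by move=> i hi; rewrite /valid hk.
have adj : forall i, i.+1 < v -> adjn (g k i) (g k i.+1).
  move=> i hi; rewrite Ha ?vk //; [rewrite /lfr /adjn; lia | lia].
have nxt : forall i, i.+2 < v -> g k i.+2 <> g k i.
  move=> i hi e; have [_ ] := Hi _ _ _ _ (vk _ hi) (vk i (ltnW (ltnW hi))) e; lia.
case: (ltnP 1 v) => hv; last first.
  left => i hi; have -> : i = 0 by lia. by rewrite addn0.
have := adj 0 hv; rewrite /adjn => /orP [/eqP h1|/eqP h1].
- left.
  have step : forall i, i.+1 < v -> g k i.+1 = (g k i).+1.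
    elim=> [|i IH] hi; first by rewrite h1.
    have := IH (ltnW hi); have := adj _ hi; have := nxt _ hi; rewrite /adjn; lia.
  elim=> [|i IH] hi; first by rewrite addn0.
  rewrite step //; have := IH (ltnW hi); lia.
- right.
  have step : forall i, i.+1 < v -> (g k i.+1).+1 = g k i.
    elim=> [|i IH] hi; first by rewrite h1.
    have := IH (ltnW hi); have := adj _ hi; have := nxt _ hi; rewrite /adjn; lia.
  elim=> [|i IH] hi; first by rewrite addn0.
  have := step _ hi; have := IH (ltnW hi); lia.
Qed.

Lemma W_ne1 ns : W ns != 1.
Proof.
elim: ns => [|x ns IH] //; rewrite /W /= -/(W ns).
case: x => [|x] /=; lia.
Qed.

Lemma L2 n : forall ns g, fullP ns PT n g -> injn ns g -> (W ns).-1 <= n.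
Proof.
elim/ltn_ind: n => n IH ns g Hf Hi.
have [Hb Ha] := Hf.
case: (Classical_Prop.classic (exists k i, valid ns k i /\ g k i = n.-1)) => [[ks [i0 [hv hM]]]|hno].
- have hn : 0 < n by have := Hb _ _ hv erefl; lia.
  have /vP [hks his] := hv.
  set v := nth 0 ns ks.
  have vk : forall i, i < v -> valid ns ks i by move=> i hi; rewrite /valid hks.
  have bnd : forall k i, valid ns k i -> g k i <= n.-1.
    by move=> k i h; have := Hb _ _ h erefl; lia.
  have nadj : forall k i j, valid ns k i -> k != ks -> j < v -> adjn (g k i) (g ks j) = false.
    move=> k i j h hne hj; rewrite Ha ?vk //; rewrite /lfr; lia.
  have ninj : forall k i j, valid ns k i -> k != ks -> j < v -> g k i <> g ks j.
    move=> k i j h hne hj e; have [e1 _] := Hi _ _ _ _ h (vk _ hj) e; lia.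
  have [hMv key] : v <= n /\ forall k i, valid ns k i -> k != ks -> g k i + v + 1 <= n.-1.
    case: (run_dir Hf Hi hks) => hr.
    + have hlast := bnd _ _ (vk v.-1 (ltac:(lia))).
      have := hr _ his; have := hr v.-1 (ltac:(lia)); rewrite hM => e1 e2.
      split; first lia.
      move=> k i h hne.
      have b := bnd _ _ h.
      case: (leqP (g ks 0) (g k i)) => c.
      * exfalso; apply: (ninj _ _ (g k i - g ks 0) h hne); first lia.
        rewrite hr; lia.
      * case: (leqP (g k i + v + 1) n.-1) => // c2.
        have e : (g k i).+1 = g ks 0 by lia.
        have := nadj _ _ 0 h hne (ltac:(lia)); rewrite /adjn; lia.
    + have e0 : g ks 0 = n.-1.
        have := hr _ his; have := bnd _ _ (vk 0 (ltac:(lia))); lia.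
      have hlast := hr v.-1 (ltac:(lia)).
      split; first lia.
      move=> k i h hne.
      have b := bnd _ _ h.
      case: (leqP (n.-1 - v) (g k i)) => c; last lia.
      case: (leqP (n.-1 - v).+1 (g k i)) => c2.
      * exfalso; apply: (ninj _ _ (n.-1 - g k i) h hne); first lia.
        have := hr (n.-1 - g k i) (ltac:(lia)); lia.
      * have := ninj _ _ v.-1 h hne (ltac:(lia)).
        have := nadj _ _ v.-1 h hne (ltac:(lia)); rewrite /adjn; lia.
  set ns' := set_nth 0 ns ks 0.
  have Hf' : fullP ns' PT (n.-1 - v) g.
    split.
    + move=> k i; rewrite valid_set0 // => /andP [h hne] _; have := key _ _ h hne; lia.
    + move=> k i k' i'; rewrite !valid_set0 // => /andP [h _] _ /andP [h' _] _; exact: Ha.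
  have Hi' : injn ns' g.
    move=> k i k' i'; rewrite !valid_set0 // => /andP [h _] /andP [h' _]; exact: Hi.
  have := IH (n.-1 - v) (ltac:(lia)) _ _ Hf' Hi'.
  have hv1 : 0 < v by lia.
  have hw := W_set 0 hks; rewrite -/v -/ns' (wt_pos hv1) in hw.
  change (wt 0) with 0 in hw. have := W_ne1 ns'. lia.
- case: (posnP n) => hn.
  + subst n. rewrite W_zero //.
    move=> k hk; case: (posnP (nth 0 ns k)) => // hp.
    have := Hb k 0; rewrite /valid hk hp => /(_ erefl erefl); lia.
  + have Hf' : fullP ns PT n.-1 g.
      split => // k i h _.
      have := Hb _ _ h erefl.
      have : g k i <> n.-1 by move=> e; apply: hno; exists k, i.
      lia.
    have := IH n.-1 (ltac:(lia)) _ _ Hf' Hi; lia.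
Qed.

Definition pdn (ns : seq nat) : Prop :=
  (forall k, k < size ns -> nth 0 ns k != 3) /\
  (forall k1 k2, k1 < size ns -> k2 < size ns -> nth 0 ns k1 = 1 -> nth 0 ns k2 = 1 -> k1 = k2).

Lemma sep1 v i i' : 1 < v -> v != 3 -> i < v -> i' < v -> i < i' ->
  exists b, b < v /\ adjn i b != adjn i' b.
Proof.
move=> h1 h3 hi hi' c.
case: (eqVneq i.+1 i') => e1; first by exists i; rewrite /adjn; lia.
case: (posnP i) => e2; last by exists i.-1; rewrite /adjn; lia.
case: (ltnP 2 i') => e3; first by exists 1; rewrite /adjn; lia.
by exists 3; rewrite /adjn; lia.
Qed.

Lemma sep v i i' : 1 < v -> v != 3 -> i < v -> i' < v -> i != i' ->
  exists b, b < v /\ adjn i b != adjn i' b.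
Proof.
move=> h1 h3 hi hi' hne; case: (ltngtP i i') => c.
- exact: sep1.
- have [b [hb e]] := sep1 h1 h3 hi' hi c; exists b; split => //; by rewrite eq_sym.
- by rewrite c eqxx in hne.
Qed.

Lemma twinA ns k i k' i' : pdn ns ->
  (forall a b, valid ns a b -> lfr k i a b = lfr k' i' a b) ->
  valid ns k i -> valid ns k' i' -> 1 < nth 0 ns k -> k = k' /\ i = i'.
Proof.
move=> [p3 p1] T /vP [hk hi] /vP [hk' hi'] hv.
set v := nth 0 ns k in hv hi.
have vk : forall b, b < v -> valid ns k b by move=> b hb; rewrite /valid hk.
pose j := if i.+1 < v then i.+1 else i.-1.
have hj : j < v by rewrite /j; case: ifP; lia.
have aj : adjn i j by rewrite /j /adjn; case: ifP; lia.
have := T _ _ (vk _ hj); rewrite {1}/lfr eqxx aj /lfr => /esym /andP [/eqP ek _].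
subst k'; split => //.
case: (eqVneq i i') => // hne.
have [b [hb e]] := sep hv (p3 _ hk) hi hi' hne.
have := T _ _ (vk _ hb); rewrite /lfr eqxx /= => e'.
by rewrite e' eqxx in e.
Qed.

Lemma L3 ns n g : pdn ns -> fullP ns PT n g -> injn ns g.
Proof.
move=> hp [Hb Ha] k i k' i' hv hv' e.
have T : forall a b, valid ns a b -> lfr k i a b = lfr k' i' a b.
  by move=> a b h; rewrite -!Ha // e.
have /vP [hk hi] := hv; have /vP [hk' hi'] := hv'.
case: (ltnP 1 (nth 0 ns k)) => c1; first exact: twinA hp T hv hv' c1.
case: (ltnP 1 (nth 0 ns k')) => c2.
  have T' : forall a b, valid ns a b -> lfr k' i' a b = lfr k i a b by move=> a b h; rewrite T.
  by have [-> ->] := twinA hp T' hv' hv c2.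
have ek := hp.2 k k' hk hk' (ltac:(lia)) (ltac:(lia)).
split => //; lia.
Qed.

Lemma MU ns k : mu_eq ns k <-> k = (W ns).-1.
Proof.
split.
- case=> h hmin.
  have [g [Hf Hi]] := C1 h.
  have := L2 Hf Hi.
  have [g' [Hf' Hi']] := L1 (leqnn (W ns).-1).
  have := hmin _ (C2 Hf' Hi'). lia.
- move=> ->; split.
  + have [g' [Hf' Hi']] := L1 (leqnn (W ns).-1). exact: C2 Hf' Hi'.
  + move=> j hj; have [g [Hf Hi]] := C1 hj; exact: L2 Hf Hi.
Qed.

Lemma relab_full ns P ns' K I n g : relab ns P ns' K I -> fullP ns' PT n g ->
  fullP ns P n (fun k i => g (K k i) (I k i)).
Proof.
move=> [Rv Rl] [Hb Ha]; split.
- by move=> k i h hP; apply: Hb => //; apply: Rv.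
- move=> k i k' i' h hP h' hP'; rewrite Ha ?Rv //; exact: Rl.
Qed.

Lemma relab_comp ns P ns' K I ns'' K' I' : relab ns P ns' K I -> relab ns' PT ns'' K' I' ->
  relab ns P ns'' (fun k i => K' (K k i) (I k i)) (fun k i => I' (K k i) (I k i)).
Proof.
move=> [Rv Rl] [Rv' Rl']; split.
- by move=> k i h hP; apply: Rv' => //; apply: Rv.
- move=> k i k' i' h hP h' hP'; rewrite Rl' ?Rv //; exact: Rl.
Qed.

Definition delns (ns : seq nat) (k0 i0 : nat) : seq nat :=
  rcons (set_nth 0 ns k0 i0) (nth 0 ns k0 - i0.+1).

Lemma size_del ns k0 i0 : k0 < size ns -> size (delns ns k0 i0) = (size ns).+1.
Proof. move=> h; rewrite /delns size_rcons size_set_nth; lia. Qed.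

Lemma nth_del ns k0 i0 k : k0 < size ns ->
  nth 0 (delns ns k0 i0) k =
  if k == size ns then nth 0 ns k0 - i0.+1 else if k == k0 then i0 else nth 0 ns k.
Proof.
move=> h; rewrite /delns nth_rcons size_set_nth nth_set_nth /=.
have -> : maxn k0.+1 (size ns) = size ns by lia.
case: ltngtP => c //.
have -> : (k == k0) = false by lia.
by rewrite nth_default //; lia.
Qed.

Lemma W_del ns k0 i0 : k0 < size ns ->
  W (delns ns k0 i0) + wt (nth 0 ns k0) = W ns + wt i0 + wt (nth 0 ns k0 - i0.+1).
Proof.
move=> h; rewrite /delns W_rcons.
have := W_set i0 h; lia.
Qed.

Definition Pdel (k0 i0 : nat) : nat -> nat -> bool := fun k i => ~~ ((k == k0) && (i == i0)).

Ltac noif t := lazymatch t with context [if _ then _ else _] => fail | _ => idtac end.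
Ltac crush :=
  repeat (match goal with
          | |- context [?a == ?b] => noif a; noif b; case: (@eqP _ a b) => ?
          | |- context [if ?c then _ else _] => noif c; case: (boolP c) => ?
          end; try subst; simpl); try lia.

Lemma relab_delF ns k0 i0 : k0 < size ns -> i0 < nth 0 ns k0 ->
  relab (delns ns k0 i0) PT ns (fun k i => if k == size ns then k0 else k)
                              (fun k i => if k == size ns then i + i0.+1 else i) /\
  (forall k i, valid (delns ns k0 i0) k i ->
     Pdel k0 i0 (if k == size ns then k0 else k) (if k == size ns then i + i0.+1 else i)).
Proof.
move=> hk hi; split; first split.
- move=> k i; rewrite /valid size_del // nth_del // => + _; move: hk hi; crush.
- move=> k i k' i'; rewrite /valid /lfr /adjn size_del // !nth_del // => + _ + _; move: hk hi; crush.
- move=> k i; rewrite /valid /Pdel size_del // nth_del //; move: hk hi; crush.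
Qed.

Lemma relab_delB ns k0 i0 : k0 < size ns -> i0 < nth 0 ns k0 ->
  relab ns (Pdel k0 i0) (delns ns k0 i0)
    (fun k i => if (k == k0) && (i0 < i) then size ns else k)
    (fun k i => if (k == k0) && (i0 < i) then i - i0.+1 else i).
Proof.
move=> hk hi; split.
- move=> k i; rewrite /valid /Pdel size_del // nth_del //; move: hk hi; crush.
- move=> k i k' i'; rewrite /valid /Pdel /lfr /adjn; move: hk hi; crush.
Qed.

Lemma nth_set ns k a j : k < size ns ->
  nth 0 (set_nth 0 ns k a) j = if j == k then a else nth 0 ns j.
Proof. by move=> h; rewrite nth_set_nth. Qed.

Lemma size_set ns k a : k < size ns -> size (set_nth 0 ns k a) = size ns.
Proof. move=> h; rewrite size_set_nth; lia. Qed.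

Lemma R3 ns k3 : k3 < size ns -> nth 0 ns k3 = 3 ->
  relab ns PT (set_nth 0 ns k3 2) (fun k i => k) (fun k i => if (k == k3) && (i == 2) then 0 else i).
Proof.
move=> hk h3; split.
- move=> k i; rewrite /valid size_set // nth_set //; move: hk h3; crush.
- move=> k i k' i'; rewrite /valid /lfr /adjn; move: hk h3; crush.
Qed.

Lemma R1 ns k1 k2 : k1 < size ns -> k2 < size ns -> k1 != k2 ->
  nth 0 ns k1 = 1 -> nth 0 ns k2 = 1 ->
  relab ns PT (set_nth 0 ns k2 0) (fun k i => if k == k2 then k1 else k) (fun k i => i).
Proof.
move=> hk1 hk2 hne h1 h2; split.
- move=> k i; rewrite /valid size_set // nth_set //; move: hk1 hk2 hne h1 h2; crush.
- move=> k i k' i'; rewrite /valid /lfr /adjn; move: hk1 hk2 hne h1 h2; crush.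
Qed.

Lemma F3 ns k3 : k3 < size ns -> nth 0 ns k3 = 3 ->
  relab ns PT ns (fun k i => k) (fun k i => if (k == k3) && (i == 2) then 0 else i) /\
  (forall k i, valid ns k i -> Pdel k3 2 k (if (k == k3) && (i == 2) then 0 else i)).
Proof.
move=> hk h3; split; first split.
- move=> k i; rewrite /valid; move: hk h3; crush.
- move=> k i k' i'; rewrite /valid /lfr /adjn; move: hk h3; crush.
- move=> k i; rewrite /valid /Pdel; move: hk h3; crush.
Qed.

Lemma F1 ns k1 k2 : k1 < size ns -> k2 < size ns -> k1 != k2 ->
  nth 0 ns k1 = 1 -> nth 0 ns k2 = 1 ->
  relab ns PT ns (fun k i => if k == k2 then k1 else k) (fun k i => i) /\
  (forall k i, valid ns k i -> Pdel k2 0 (if k == k2 then k1 else k) i).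
Proof.
move=> hk1 hk2 hne h1 h2; split; first split.
- move=> k i; rewrite /valid; move: hk1 hk2 hne h1 h2; crush.
- move=> k i k' i'; rewrite /valid /lfr /adjn; move: hk1 hk2 hne h1 h2; crush.
- move=> k i; rewrite /valid /Pdel; move: hk1 hk2 hne h1 h2; crush.
Qed.

Lemma CNT1 (x : nat) (ns : seq nat) : 0 < count_mem x ns -> exists k, k < size ns /\ nth 0 ns k = x.
Proof.
elim: ns => [|y ns IH] //=.
case: (eqVneq y x) => [->|hne] /= h; first by exists 0.
rewrite ?(negbTE hne) /= in h.
have [k [hk e]] := IH h; exists k.+1; split => //.
Qed.

Lemma CNT2 (x : nat) (ns : seq nat) : 2 <= count_mem x ns ->
  exists k1 k2, [/\ k1 < size ns, k2 < size ns, k1 != k2, nth 0 ns k1 = x & nth 0 ns k2 = x].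
Proof.
elim: ns => [|y ns IH] //=.
case: (eqVneq y x) => [->|hne] /= h.
- rewrite ?eqxx /= in h.
  have hc : 0 < count_mem x ns := h.
  have [k [hk e]] := CNT1 hc.
  by exists 0, k.+1.
- rewrite ?(negbTE hne) /= in h.
  have [k1 [k2 [h1 h2 h3 h4 h5]]] := IH h.
  by exists k1.+1, k2.+1.
Qed.

Lemma CNT2' (x : nat) (ns : seq nat) k1 k2 : k1 < size ns -> k2 < size ns -> k1 != k2 ->
  nth 0 ns k1 = x -> nth 0 ns k2 = x -> 2 <= count_mem x ns.
Proof.
have memx : forall (s : seq nat) k, k < size s -> nth 0 s k = x -> 0 < count_mem x s.
  elim=> [|y s IH] [|k] //= hk e; first by rewrite e eqxx.
  have := IH k hk e; case: (y == x) => /=; lia.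
elim: ns k1 k2 => [|y ns IH] [|k1] [|k2] //= h1 h2 hne e1 e2.
- have := memx _ _ h2 e2; rewrite e1 eqxx /=; lia.
- have := memx _ _ h1 e1; rewrite e2 eqxx /=; lia.
- have := IH k1 k2 h1 h2 hne e1 e2; case: (y == x) => /=; lia.
Qed.

Lemma Hcol ns n k0 i0 :
  (forall S : {set LF_vert ns}, S \proper [set: LF_vert ns] ->
      full_colourable (@induced _ (@LF_rel ns) S) (@path_rel n)) ->
  k0 < size ns -> i0 < nth 0 ns k0 ->
  full_colourable (@induced _ (@LF_rel ns) [set x : LF_vert ns | Pdel k0 i0 (tag x) (tagged x)])
     (@path_rel n).
Proof.
move=> H1 hk hi; apply: H1; rewrite properT; apply/eqP => e.
have := in_setT (mkv hk hi); rewrite -e inE /Pdel /=; lia.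
Qed.

Lemma FWD_pd ns n :
  ~ full_colourable (@LF_rel ns) (@path_rel n) ->
  (forall S : {set LF_vert ns}, S \proper [set: LF_vert ns] ->
      full_colourable (@induced _ (@LF_rel ns) S) (@path_rel n)) -> pdn ns.
Proof.
move=> H0 H1; split.
- move=> k hk; apply/negP => /eqP h3; apply: H0.
  have [R Pc] := F3 hk h3.
  have col := Hcol H1 hk (ltac:(lia) : 2 < nth 0 ns k).
  have [g Hg] := C5 R Pc col. exact: C4 Hg.
- move=> k1 k2 hk1 hk2 h1 h2; case: (eqVneq k1 k2) => // hne; exfalso; apply: H0.
  have [R Pc] := F1 hk1 hk2 hne h1 h2.
  have col := Hcol H1 hk2 (ltac:(lia) : 0 < nth 0 ns k2).
  have [g Hg] := C5 R Pc col. exact: C4 Hg.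
Qed.

Lemma pdn_del ns k0 i0 : pdn ns -> k0 < size ns -> i0 != 3 -> nth 0 ns k0 - i0.+1 != 3 ->
  (forall k, k < size ns -> nth 0 ns k = 1 -> (i0 != 1) && (nth 0 ns k0 - i0.+1 != 1)) ->
  ~~ ((i0 == 1) && (nth 0 ns k0 - i0.+1 == 1)) ->
  pdn (delns ns k0 i0).
Proof.
move=> [p3 p1] hk h3a h3b Hno hboth; split.
- move=> k; rewrite size_del // nth_del // => hk'.
  case: ifP => c1; first by []. case: ifP => c2; first by []. apply: p3; lia.
- move=> a b; rewrite size_del // !nth_del // => ha hb.
  case: (eqVneq a (size ns)) => [ea|na]; case: (eqVneq b (size ns)) => [eb|nb];
  case: (eqVneq a k0) => [ea'|na']; case: (eqVneq b k0) => [eb'|nb']; move=> e1 e2;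
  first [ lia | (have := Hno a (ltac:(lia)) e1; lia) | (have := Hno b (ltac:(lia)) e2; lia)
        | (apply: p1; lia) ].
Qed.

Lemma FWD_del ns n k0 i0 :
  (forall S : {set LF_vert ns}, S \proper [set: LF_vert ns] ->
      full_colourable (@induced _ (@LF_rel ns) S) (@path_rel n)) ->
  k0 < size ns -> i0 < nth 0 ns k0 -> pdn (delns ns k0 i0) ->
  (W (delns ns k0 i0)).-1 <= n.
Proof.
move=> H1 hk hi hp.
have [R Pc] := relab_delF hk hi.
have [g Hg] := C5 R Pc (Hcol H1 hk hi).
exact: L2 Hg (L3 hp Hg).
Qed.

Lemma BK0 ns n k0 i0 ns' K I : relab ns (Pdel k0 i0) ns' K I -> (W ns').-1 <= n ->
  full_colourable (@induced _ (@LF_rel ns) [set x : LF_vert ns | Pdel k0 i0 (tag x) (tagged x)])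
     (@path_rel n).
Proof.
move=> R hW; have [g [Hg _]] := L1 hW.
exact: C6 (relab_full R Hg).
Qed.

Lemma BK3 ns n k0 i0 ns' K I k3 : relab ns (Pdel k0 i0) ns' K I ->
  k3 < size ns' -> nth 0 ns' k3 = 3 -> (W ns').-1 <= n.+1 ->
  full_colourable (@induced _ (@LF_rel ns) [set x : LF_vert ns | Pdel k0 i0 (tag x) (tagged x)])
     (@path_rel n).
Proof.
move=> R hk h3 hW; apply: BK0 (relab_comp R (R3 hk h3)) _.
have := W_set 2 hk; rewrite h3 /wt /= -/wt; have := W_ne1 (set_nth 0 ns' k3 2); lia.
Qed.

Lemma BK1 ns n k0 i0 ns' K I k1 k2 : relab ns (Pdel k0 i0) ns' K I ->
  k1 < size ns' -> k2 < size ns' -> k1 != k2 -> nth 0 ns' k1 = 1 -> nth 0 ns' k2 = 1 ->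
  (W ns').-1 <= n.+2 ->
  full_colourable (@induced _ (@LF_rel ns) [set x : LF_vert ns | Pdel k0 i0 (tag x) (tagged x)])
     (@path_rel n).
Proof.
move=> R hk1 hk2 hne h1 h2 hW; apply: BK0 (relab_comp R (R1 hk1 hk2 hne h1 h2)) _.
have := W_set 0 hk2; rewrite h2 /wt /= -/wt; lia.
Qed.

Lemma wtF x : (x = 0 /\ wt x = 0) \/ (0 < x /\ wt x = x.+1).
Proof. by case: x => [|x]; [left|right]. Qed.

Lemma CNT0 (x : nat) (s : seq nat) k : k < size s -> nth 0 s k = x -> 0 < count_mem x s.
Proof.
elim: s k => [|y s IH] [|k] //= hk e; first by rewrite e eqxx.
have := IH k hk e; case: (y == x) => /=; lia.
Qed.

Lemma proper_sub2 ns (S : {set LF_vert ns}) : S \proper [set: LF_vert ns] ->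
  exists k0 i0, [/\ k0 < size ns, i0 < nth 0 ns k0 &
     S \subset [set x : LF_vert ns | Pdel k0 i0 (tag x) (tagged x)]].
Proof.
move/properP => [_ [v _ hv]].
have /vP [hk hi] := valid_tag v.
exists (tag v), (tagged v); split => //.
apply/subsetP => x hx; rewrite inE /Pdel.
apply/negP => /andP [/eqP e1 /eqP e2].
have exv : x = v by apply: LF_eq.
by move: hv; rewrite -exv hx.
Qed.


Lemma forward (ns : seq nat) (n : nat) :
  all (fun nk => 0 < nk) ns -> 0 < n ->
  min_obstruction (@LF_rel ns) (@path_rel n) ->
   [\/ mu_eq ns n.+1 /\ all (fun nk => nk == 2) ns,
       [/\ mu_eq ns n.+1, all (fun nk => nk \in [:: 1; 2; 4; 6]) ns & count_mem 1 ns = 1]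
     | [/\ mu_eq ns n.+2, all (fun nk => nk \in [:: 1; 2; 4]) ns & count_mem 1 ns = 1]].
Proof.
move=> hpos hn [H0 H1].
move/(all_nthP 0): hpos => hposk.
have hp := FWD_pd H0 H1.
have [p3 p1] := hp.
have hs : n.+1 <= (W ns).-1.
  rewrite ltnNge; apply/negP => h; apply: H0; have [g [Hg _]] := L1 h; exact: C4 Hg.
have DC : forall k i0, k < size ns -> i0 < nth 0 ns k -> pdn (delns ns k i0) ->
    W ns + wt i0 + wt (nth 0 ns k - i0.+1) <= n.+1 + wt (nth 0 ns k).
  move=> k i0 hk hi hpd.
  have := W_del i0 hk; have := FWD_del H1 hk hi hpd; lia.
have hvk : forall k, k < size ns ->
   [/\ nth 0 ns k != 5, nth 0 ns k <= 6 &
     ((nth 0 ns k == 4) || (nth 0 ns k == 6) -> exists k1, k1 < size ns /\ nth 0 ns k1 = 1)].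
  move=> k hk; have v0 := hposk k hk; have v3 := p3 k hk.
  split.
  - apply/negP => /eqP h5.
    have := DC k 2 hk (ltac:(lia)) (pdn_del (i0:=2) hp hk (ltac:(lia)) (ltac:(lia)) (ltac:(move=> *; lia)) (ltac:(lia))).
    have := wtF 2; have := wtF (nth 0 ns k - 3); have := wtF (nth 0 ns k); lia.
  - rewrite leqNgt; apply/negP => h7.
    have := DC k 2 hk (ltac:(lia)) (pdn_del (i0:=2) hp hk (ltac:(lia)) (ltac:(lia)) (ltac:(move=> *; lia)) (ltac:(lia))).
    have := wtF 2; have := wtF (nth 0 ns k - 3); have := wtF (nth 0 ns k); lia.
  - move=> h46; apply: NNPP => hne.
    have Hno : forall k', k' < size ns -> nth 0 ns k' = 1 -> (1 != 1) && (nth 0 ns k - 2 != 1).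
      by move=> k' hk' e; exfalso; apply: hne; exists k'.
    have := DC k 1 hk (ltac:(lia)) (pdn_del (i0:=1) hp hk (ltac:(lia)) (ltac:(lia)) Hno (ltac:(lia))).
    have := wtF 1; have := wtF (nth 0 ns k - 2); have := wtF (nth 0 ns k); lia.
have hv : forall k, k < size ns -> nth 0 ns k \in [:: 1; 2; 4; 6].
  move=> k hk; have v0 := hposk k hk; have v3 := p3 k hk; have [v5 v6 _] := hvk k hk.
  rewrite !inE; lia.
case: (classic (exists k1, k1 < size ns /\ nth 0 ns k1 = 1)) => [[k1 [hk1 h1]]|hne].
- have hcnt : count_mem 1 ns = 1.
    have := CNT0 hk1 h1.
    case: (ltnP 1 (count_mem 1 ns)) => c; last lia.
    have [a [b [ha hb hab e1 e2]]] := CNT2 c.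
    have := p1 a b ha hb e1 e2; lia.
  have := DC k1 0 hk1 (ltac:(lia)) (pdn_del (i0:=0) hp hk1 (ltac:(lia)) (ltac:(lia)) (ltac:(move=> *; lia)) (ltac:(lia))).
  have := wtF 0; have := wtF (nth 0 ns k1 - 1); have := wtF (nth 0 ns k1) => w1 w2 w3 hb.
  case: (eqVneq (W ns).-1 n.+1) => e.
  + apply: Or32; split => //; first by apply/MU.
    by apply/(all_nthP 0).
  + apply: Or33; split => //; first by apply/MU; lia.
    apply/(all_nthP 0) => k hk.
    have := hv k hk; rewrite !inE => hk'.
    case: (eqVneq (nth 0 ns k) 6) => e6; last by lia.
    have := DC k 0 hk (ltac:(lia)) (pdn_del (i0:=0) hp hk (ltac:(lia)) (ltac:(lia)) (ltac:(move=> *; lia)) (ltac:(lia))).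
    have := wtF 0; have := wtF (nth 0 ns k - 1); have := wtF (nth 0 ns k); lia.
- have h2 : forall k, k < size ns -> nth 0 ns k = 2.
    move=> k hk; have := hv k hk; rewrite !inE.
    have [_ _ h46] := hvk k hk.
    case: (eqVneq (nth 0 ns k) 1) => e1; first by exfalso; apply: hne; exists k.
    case: (eqVneq (nth 0 ns k) 4) => e4; first by have := h46 (ltac:(lia)).
    case: (eqVneq (nth 0 ns k) 6) => e6; first by have := h46 (ltac:(lia)).
    lia.
  have hsz : 0 < size ns.
    case: ns hposk h2 hs {hv hvk DC hp p1 p3 H0 H1 hne} => //.
  have Hno : forall k', k' < size ns -> nth 0 ns k' = 1 -> (0 != 1) && (nth 0 ns 0 - 1 != 1).
    by move=> k' hk' e; exfalso; apply: hne; exists k'.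
  have e20 := h2 0 hsz.
  have := DC 0 0 hsz (ltac:(lia)) (pdn_del (i0:=0) hp hsz (ltac:(lia)) (ltac:(lia)) Hno (ltac:(lia))).
  have := wtF 0; have := wtF (nth 0 ns 0 - 1); have := wtF (nth 0 ns 0) => w1 w2 w3 hb.
  apply: Or31; split; first by apply/MU; lia.
  apply/(all_nthP 0) => k hk; by rewrite h2.
Qed.


Lemma back_core (ns : seq nat) (n : nat) (e1 : bool) :
  pdn ns ->
  (forall k, k < size ns -> 0 < nth 0 ns k) ->
  (W ns).-1 = n.+1 \/ (W ns).-1 = n.+2 ->
  (e1 -> exists k1, k1 < size ns /\ nth 0 ns k1 = 1) ->
  (forall k, k < size ns -> nth 0 ns k \in [:: 1; 2; 4; 6]) ->
  (forall k, k < size ns -> nth 0 ns k = 6 -> (W ns).-1 = n.+1) ->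
  (~~ e1 -> (W ns).-1 = n.+1 /\ forall k, k < size ns -> nth 0 ns k = 2) ->
  min_obstruction (@LF_rel ns) (@path_rel n).
Proof.
move=> hpd hposk hmu he hv h6 hne1; split.
- move=> col; have [g Hg] := C3 col; have := L2 Hg (L3 hpd Hg); lia.
- move=> S0 hS; have [k0 [i0 [hk hi hsub]]] := proper_sub2 hS.
  apply: restrict_col hsub _.
  have R := relab_delB hk hi.
  have hw := W_del i0 hk.
  have hsz := size_del i0 hk.
  have n0 : nth 0 (delns ns k0 i0) k0 = i0.
    rewrite nth_del // eqxx; case: eqP => //; lia.
  have nS : nth 0 (delns ns k0 i0) (size ns) = nth 0 ns k0 - i0.+1.
    by rewrite nth_del // eqxx.
  have w1 := wtF i0; have w2 := wtF (nth 0 ns k0 - i0.+1); have w3 := wtF (nth 0 ns k0).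
  have v0 := hposk k0 hk.
  have := hv k0 hk; rewrite !inE => hvv.
  case: e1 he hne1 => [he _|_ hne1].
  + have [k1 [hk1 h1]] := he isT.
    case: (eqVneq k1 k0) => [ek|nk].
    * subst k1. apply: (BK0 R); lia.
    * have n1 : nth 0 (delns ns k0 i0) k1 = 1.
        rewrite nth_del // (negbTE nk); case: eqP => //; lia.
      have h6' : nth 0 ns k0 = 6 -> (W ns).-1 = n.+1 := h6 k0 hk.
      case: (eqVneq i0 1) => c1.
        apply: (BK1 R (k1:=k1) (k2:=k0)) => //; try lia.
      case: (eqVneq (nth 0 ns k0 - i0.+1) 1) => c2.
        apply: (BK1 R (k1:=k1) (k2:=size ns)) => //; try lia.
      case: (eqVneq i0 3) => c3.
        apply: (BK3 R (k3:=k0)) => //; try lia.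
      case: (eqVneq (nth 0 ns k0 - i0.+1) 3) => c4.
        apply: (BK3 R (k3:=size ns)) => //; try lia.
      apply: (BK0 R); lia.
  + have [hm h2] := hne1 isT.
    have e2 := h2 k0 hk.
    apply: (BK0 R); lia.
Qed.


Unset Implicit Arguments.

Theorem proposition2p5 (ns : seq nat) (n : nat) :
  all (fun nk => 0 < nk) ns -> 0 < n ->
  (min_obstruction (@LF_rel ns) (@path_rel n) <->
   [\/ mu_eq ns n.+1 /\ all (fun nk => nk == 2) ns,
       [/\ mu_eq ns n.+1, all (fun nk => nk \in [:: 1; 2; 4; 6]) ns & count_mem 1 ns = 1]
     | [/\ mu_eq ns n.+2, all (fun nk => nk \in [:: 1; 2; 4]) ns & count_mem 1 ns = 1]]).
Proof.
move=> hpos hn; split; first exact: forward.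
have hposk : forall k, k < size ns -> 0 < nth 0 ns k by apply/(all_nthP 0).
have p1c : count_mem 1 ns = 1 -> forall k1 k2, k1 < size ns -> k2 < size ns ->
    nth 0 ns k1 = 1 -> nth 0 ns k2 = 1 -> k1 = k2.
  move=> hc k1 k2 h1 h2 e1 e2; case: (eqVneq k1 k2) => // hne.
  have := CNT2' h1 h2 hne e1 e2; lia.
case=> [[/MU hm /(all_nthP 0) h2] | [/MU hm /(all_nthP 0) hv hc] | [/MU hm /(all_nthP 0) hv hc]].
- apply: (@back_core ns n false) => //.
  + split => k; first by move=> hk; rewrite (eqP (h2 k hk)).
    by move=> k2 hk _ e; have := h2 k hk; rewrite e.
  + lia.
  + by move=> k hk; rewrite (eqP (h2 k hk)).
  + move=> _; split; first lia.
    by move=> k hk; apply/eqP; apply: h2.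
- apply: (@back_core ns n true) => //.
  + split; last exact: p1c.
    move=> k hk; have := hv k hk; rewrite !inE; lia.
  + lia.
  + move=> _; apply: CNT1; lia.
- apply: (@back_core ns n true) => //.
  + split; last exact: p1c.
    move=> k hk; have := hv k hk; rewrite !inE; lia.
  + lia.
  + move=> _; apply: CNT1; lia.
  + by move=> k hk; have := hv k hk; rewrite !inE; lia.
  + move=> k hk e; have := hv k hk; rewrite !inE; lia.
Qed.
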